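(* In the setting of the context, with $\alpha_k=\frac a{(b+k)^\gamma}$, $\gamma\in(\frac12,1)$, $a>0$, $b>1$, $\frac a{b^\gamma}\le\frac1{2M\tilde L}$, for every $n\ge0$ and $0\le k\le n$, $$B_k\le\frac{a^2M\tilde Lc(A)\sigma_{\max}^2}{2\gamma-1}(b+k-1)^{1-2\gamma}\exp\Big(\frac{a\sigma_{\min}^2}{1-\gamma}(b+k+1)^{1-\gamma}\Big)\exp\Big(-\frac{a\sigma_{\min}^2}{1-\gamma}(b+n+1)^{1-\gamma}\Big).$$
   Context: Standing setting: $M\ge N$, $A\in\mathbb{R}^{M\times N}$ of full column rank with rows $a_1,\dots,a_M$; singular values $\sigma_1\ge\dots\ge\sigma_N>0$, $\sigma_{\max}=\sigma_1$, $\sigma_{\min}=\sigma_N$, $c(A)=\sigma_{\max}^2/\sigma_{\min}^2$, $\tilde L=\max_i\|a_i\|^2$. Fix $\ell$. For $\alpha>0$: $A(\alpha)=1-2\alpha\sigma_\ell^2$, $B(\alpha)=\alpha^2M\tilde Lc(A)\sigma_{\max}^2$, $p(\alpha)=1-\alpha\sigma_{\min}^2$. For fixed $n$ and $0\le k\le n$: $B_k=\sum_{j=k}^n\Big(\prod_{i=j+1}^nA(\alpha_i)\Big)B(\alpha_j)\Big(\prod_{i=k}^{j-1}p(\alpha_i)\Big)$ (empty products $1$). Step-size scalars $a,b$ are unrelated to the rows $a_i$. *)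

(* Defs.v *)
From HB Require Import structures.
From mathcomp Require Import all_boot all_order all_algebra.
From mathcomp Require Import all_classical all_reals sequences exp.
Set Implicit Arguments. Unset Strict Implicit. Unset Printing Implicit Defensive.
Import Order.TTheory GRing.Theory Num.Theory.
Local Open Scope ring_scope.

Section Defs.
Variable R : realType.

Definition row_norm2 (m n : nat) (A : 'M[R]_(m, n)) (i : 'I_m) : R :=
  \sum_(j < n) (A i j) ^+ 2.

Definition Ltilde (m n : nat) (A : 'M[R]_(m, n)) : R :=
  \big[Num.max/0]_(i < m) row_norm2 A i.

Definition is_singular_values (m n : nat) (A : 'M[R]_(m, n)) (sigma : 'I_n -> R) : Prop :=
  (forall i, 0 <= sigma i) /\
  (forall i j : 'I_n, (i <= j)%N -> sigma j <= sigma i) /\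
  exists (U : 'M[R]_(m, n)) (V : 'M[R]_n),
    U^T *m U = 1%:M /\ V^T *m V = 1%:M /\
    A = U *m diag_mx (\row_i sigma i) *m V^T.

Definition alpha (a b gamma : R) (k : nat) : R := a / (b + k%:R) `^ gamma.

Definition Bk (Af Bf pf : R -> R) (al : nat -> R) (n k : nat) : R :=
  \sum_(k <= j < n.+1)
     (\prod_(j.+1 <= i < n.+1) Af (al i)) * Bf (al j) * (\prod_(k <= i < j) pf (al i)).

End Defs.

(* Main.v *)
Require Import Defs.
From HB Require Import structures.
From mathcomp Require Import all_boot all_order all_algebra.
From mathcomp Require Import all_classical all_reals sequences exp.
From mathcomp Require Import ring lra.
Import Order.TTheory GRing.Theory Num.Theory.
Local Open Scope ring_scope.

Section H.
Variable R : realType.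

Lemma young1 (r h : R) : 0 < r -> r < 1 -> 0 <= h -> (1 + h) `^ r <= 1 + r * h.
Proof.
move=> r0 r1 h0.
have := @conjugate_powR R ((1 + h) `^ r) 1 r^-1 (1 - r)^-1 (powR_ge0 _ _) ler01.
rewrite invr_gt0 r0 invr_gt0 subr_gt0 r1 !invrK => /(_ isT isT).
rewrite addrC subrK => /(_ erefl).
rewrite mulr1 -powRrM mulfV ?gt_eqF // powRr1 ?addr_ge0 // powR1.
move=> H; apply: (le_trans H); lra.
Qed.

Lemma tang1 (r x : R) : 0 < r -> r < 1 -> 0 < x ->
  (x + 1) `^ r - x `^ r <= r * x `^ (r - 1).
Proof.
move=> r0 r1 x0.
have -> : x + 1 = x * (1 + x^-1) by rewrite mulrDr mulr1 mulfV ?gt_eqF.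
have xi' : 0 <= 1 + x^-1 by rewrite addr_ge0 // invr_ge0 ltW.
rewrite (powRM _ (ltW x0) xi').
have xi : 0 <= x^-1 by rewrite invr_ge0 ltW.
have H := @young1 r x^-1 r0 r1 xi.
have xr : 0 <= x `^ r by apply: powR_ge0.
have := ler_wpM2l xr H.
have hx : (r == 1) ==> (x != 0) by rewrite (gt_eqF x0) implybT.
rewrite (powRB hx) (powRr1 (ltW x0)) => H2.
apply: (le_trans (y := x `^ r * (1 + r / x) - x `^ r)); first lra.
by rewrite mulrDr mulr1 addrC addKr mulrCA.
Qed.

Lemma tang2 (s y : R) : 0 < s -> 0 < y ->
  s * (y + 1) `^ (- s - 1) <= y `^ (- s) - (y + 1) `^ (- s).
Proof.
move=> s0 y0.
have Y0 : 0 < y + 1 by lra.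
set q := y / (y + 1).
have q0 : 0 < q by rewrite divr_gt0.
have ey : y `^ (- s) = q `^ (- s) * (y + 1) `^ (- s).
  rewrite -powRM ?ltW //; congr (_ `^ _).
  by rewrite /q mulfVK // lt0r_neq0.
rewrite ey.
have Hq : 1 + s * (1 - q) <= q `^ (- s).
  rewrite /powR gt_eqF //.
  apply: le_trans (expR_ge1Dx _); rewrite lerD2l.
  have Hl := @le_ln1Dx R (q - 1) ltac:(lra).
  have eq1 : 1 + (q - 1) = q by lra.
  rewrite eq1 in Hl.
  nra.
have e1 : 1 - q = (y + 1)^-1.
  by rewrite /q; field; exact: lt0r_neq0.
rewrite e1 in Hq.
have -> : (y + 1) `^ (- s - 1) = (y + 1) `^ (- s) * (y + 1)^-1.
  have hx : (- s == 1) ==> (y + 1 != 0) by rewrite (lt0r_neq0 Y0) implybT.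
  by rewrite (powRB hx) (powRr1 (ltW Y0)).
have P : 0 <= (y + 1) `^ (- s) by apply: powR_ge0.
have := ler_wpM2r P Hq. nra.
Qed.


Lemma alpha_gt0 (a b g : R) j : 0 < a -> 0 < b -> 0 < alpha a b g j.
Proof.
move=> a0 b0; rewrite /alpha divr_gt0 // powR_gt0 //.
by apply: (lt_le_trans b0); rewrite lerDl.
Qed.

Lemma alpha_anti (a b g : R) i j : 0 < a -> 0 < b -> 0 <= g -> (i <= j)%N ->
  alpha a b g j <= alpha a b g i.
Proof.
move=> a0 b0 g0 ij; rewrite /alpha ler_pM2l // lef_pV2 ?posrE ?powR_gt0 //;
  try by apply: (lt_le_trans b0); rewrite lerDl.
apply: ge0_ler_powR => //; rewrite ?nnegrE; try (apply: addr_ge0; [exact: ltW|]) => //.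
by rewrite lerD2l ler_nat.
Qed.

Lemma main_bound (a b g sl smin s0 K : R) (Af Bf pf : R -> R) (n k : nat) :
  1 / 2 < g -> g < 1 -> 0 < a -> 1 < b ->
  0 < smin -> smin <= sl -> sl <= s0 ->
  2 * (a / b `^ g) * s0 ^+ 2 <= 1 -> 0 <= K -> (k <= n)%N ->
  (forall al, Af al = 1 - 2 * al * sl ^+ 2) ->
  (forall al, Bf al = al ^+ 2 * K) ->
  (forall al, pf al = 1 - al * smin ^+ 2) ->
  Bk Af Bf pf (alpha a b g) n k <=
    K * a ^+ 2 / (2 * g - 1) * (b + k%:R - 1) `^ (1 - 2 * g)
    * expR (a * smin ^+ 2 / (1 - g) * (b + k%:R + 1) `^ (1 - g))
    * expR (- (a * smin ^+ 2 / (1 - g)) * (b + n%:R + 1) `^ (1 - g)).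
Proof.
move=> g1 g2 a0 b1 sm0 sml sl0 hstep K0 kn hA hB hp.
set al := alpha a b g.
have al0 j : 0 < al j by apply: alpha_gt0 => //; lra.
have alA i j : (i <= j)%N -> al j <= al i.
  by move=> ij; apply: alpha_anti => //; lra.
have alb j : 2 * al j * s0 ^+ 2 <= 1.
  have : al j <= a / b `^ g by have := alA 0%N j isT; rewrite /al /alpha addr0.
  have : 0 <= s0 ^+ 2 by apply: sqr_ge0.
  nra.
have sl2 : smin ^+ 2 <= sl ^+ 2 by rewrite ler_sqr ?nnegrE //; lra.
have s02 : sl ^+ 2 <= s0 ^+ 2 by rewrite ler_sqr ?nnegrE //; lra.
have smpos : 0 < smin ^+ 2 by rewrite exprn_gt0.
have Abnd j : 0 <= Af (al j) <= pf (al j).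
  rewrite hA hp; move: (alb j) (al0 j) => h1 h2; apply/andP; split; nra.
have pbnd j : 0 <= pf (al j).
  by have /andP[h1 h2] := Abnd j; exact: le_trans h2.
have pmono j : pf (al j) <= pf (al j.+1).
  rewrite !hp; have := alA j j.+1 (leqnSn j); nra.
set P := \prod_(k.+1 <= i < n.+1) pf (al i).
have P0 : 0 <= P by apply: prodr_ge0 => i _.
have stepA : Bk Af Bf pf al n k <= \sum_(k <= j < n.+1) (al j ^+ 2 * K * P).
  rewrite /Bk; apply: ler_sum_nat => j /andP[kj jn].
  rewrite hB.
  set PA := \prod_(j.+1 <= i < n.+1) Af (al i).
  set PJ := \prod_(j.+1 <= i < n.+1) pf (al i).
  set PK := \prod_(k <= i < j) pf (al i).
  set PK' := \prod_(k.+1 <= i < j.+1) pf (al i).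
  have eP : P = PK' * PJ by rewrite /P (big_cat_nat _ (n:=j.+1)).
  rewrite eP.
  have h1 : PA <= PJ by apply: ler_prod => i _; exact: Abnd.
  have h2 : PK <= PK'.
    rewrite /PK /PK' big_add1 /=; apply: ler_prod => i _; by rewrite pbnd pmono.
  have PA0 : 0 <= PA by apply: prodr_ge0 => i _; case/andP: (Abnd i).
  have PK0 : 0 <= PK by apply: prodr_ge0 => i _.
  have c0 : 0 <= al j ^+ 2 * K by rewrite mulr_ge0 ?sqr_ge0.
  apply: le_trans (_ : PJ * (al j ^+ 2 * K) * PK' <= _).
    by apply: ler_pM => //; [rewrite mulr_ge0 | apply: ler_pM].
  by rewrite le_eqVlt; apply/orP; left; apply/eqP; ring.
have stepC : \sum_(k <= j < n.+1) al j ^+ 2 <=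
    a ^+ 2 / (2 * g - 1) * (b + k%:R - 1) `^ (1 - 2 * g).
  set s := 2 * g - 1.
  have sp : 0 < s by rewrite /s; lra.
  have e12 : 1 - 2 * g = - s by rewrite /s; ring.
  rewrite e12.
  set G := fun j : nat => (b + j%:R - 1) `^ (- s).
  have term j : al j ^+ 2 <= a ^+ 2 / s * (G j - G j.+1).
    have jn0 : 0 <= j%:R :> R by apply: ler0n.
    have y0 : 0 < b + j%:R - 1 by lra.
    have T := @tang2 s (b + j%:R - 1) sp y0.
    have ey : b + j%:R - 1 + 1 = b + j%:R by ring.
    rewrite ey in T.
    have eG : G j.+1 = (b + j%:R) `^ (- s).
      by rewrite /G -natr1; congr (_ `^ _); ring.
    have eal : al j ^+ 2 = a ^+ 2 * (b + j%:R) `^ (- s - 1).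
      have -> : - s - 1 = - (g * 2) by rewrite /s; ring.
      rewrite /al /alpha powRN powRrM powR_mulrn ?powR_ge0 //.
      by rewrite expr_div_n.
    rewrite eal eG.
    have -> : a ^+ 2 * (b + j%:R) `^ (- s - 1) =
        a ^+ 2 / s * (s * (b + j%:R) `^ (- s - 1)).
      by field; exact: lt0r_neq0.
    apply: ler_wpM2l => //.
    by rewrite divr_ge0 ?sqr_ge0 // (ltW sp).
  apply: le_trans (ler_sum_nat (fun j _ => term j)) _.
  rewrite -mulr_sumr.
  have -> : \sum_(k <= j < n.+1) (G j - G j.+1) = G k - G n.+1.
    rewrite -[RHS]opprB -(@telescope_sumr _ k n.+1 G) ?ltnS //.
    by rewrite !sumrB opprB.
    by apply: (leq_trans kn).
  apply: ler_wpM2l; first by rewrite divr_ge0 ?sqr_ge0 // (ltW sp).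
  by rewrite gerBl /G powR_ge0.
set r := 1 - g.
have rp : 0 < r by rewrite /r; lra.
have r1 : r < 1 by rewrite /r; lra.
set c := a * smin ^+ 2 / r.
have stepD : P <= expR (c * (b + k%:R + 1) `^ r) * expR (- c * (b + n%:R + 1) `^ r).
  apply: le_trans (_ : P <= \prod_(k.+1 <= i < n.+1) expR (- (al i * smin ^+ 2))) _.
    apply: ler_prod => i _; rewrite pbnd /= hp; exact: expR_ge1Dx.
  rewrite -expR_sum -expRD ler_expR.
  set F := fun i : nat => (b + i%:R) `^ r.
  have term i : a / r * (F i.+1 - F i) <= al i.
    have in0 : 0 <= i%:R :> R by apply: ler0n.
    have x0 : 0 < b + i%:R by lra.
    have T := @tang1 r (b + i%:R) rp r1 x0.
    have eF : F i.+1 = (b + i%:R + 1) `^ r by rewrite /F -natr1 addrA.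
    have eal : al i = a * (b + i%:R) `^ (r - 1).
      by rewrite /al /alpha (_ : r - 1 = - g) ?powRN // /r; ring.
    rewrite eF eal.
    apply: le_trans (_ : a / r * (r * (b + i%:R) `^ (r - 1)) <= _).
      by apply: ler_wpM2l => //; rewrite divr_ge0 // ltW.
    rewrite le_eqVlt; apply/orP; left; apply/eqP; field; exact: lt0r_neq0.
  have tel : a / r * (F n.+1 - F k.+1) = \sum_(k.+1 <= i < n.+1) a / r * (F i.+1 - F i).
    by rewrite -mulr_sumr telescope_sumr.
  apply: (le_trans (y := - (smin ^+ 2 * (a / r * (F n.+1 - F k.+1))))).
    rewrite tel mulr_sumr -sumrN; apply: ler_sum_nat => i _.
    have := term i; nra.
  have eFn : F n.+1 = (b + n%:R + 1) `^ r by rewrite /F -natr1 addrA.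
  have eFk : F k.+1 = (b + k%:R + 1) `^ r by rewrite /F -natr1 addrA.
  rewrite eFn eFk /c le_eqVlt; apply/orP; left; apply/eqP; field; exact: lt0r_neq0.
apply: le_trans stepA _.
rewrite -!mulr_suml.
have S0 : 0 <= \sum_(k <= j < n.+1) al j ^+ 2 by apply: sumr_ge0 => j _; apply: sqr_ge0.
apply: le_trans (ler_pM (mulr_ge0 S0 K0) P0 (ler_wpM2r K0 stepC) stepD) _.
rewrite le_eqVlt; apply/orP; left; apply/eqP; ring.
Qed.

Lemma le_bigmax_seq (I : eqType) (s : seq I) (F : I -> R) i :
  i \in s -> F i <= \big[Num.max/0]_(j <- s) F j.
Proof.
elim: s => // x s IH; rewrite in_cons big_cons => /orP[/eqP ->|/IH h].
  by rewrite le_max lexx.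
by rewrite le_max h orbT.
Qed.

Lemma svd_bound (M N : nat) (A : 'M[R]_(M, N.+1)) (sigma : 'I_N.+1 -> R) :
  is_singular_values A sigma -> sigma ord0 ^+ 2 <= M%:R * Ltilde A.
Proof.
case=> sg0 [_ [U [V [hU [hV hA]]]]].
set D := diag_mx (\row_i sigma i).
have tr1 : \tr (A^T *m A) = \sum_(i < N.+1) sigma i ^+ 2.
  rewrite hA !trmx_mul trmxK tr_diag_mx -/D.
  have -> : V *m (D *m U^T) *m (U *m D *m V^T) = V *m (D *m D *m V^T).
    by rewrite !mulmxA -(mulmxA (V *m D) U^T U) hU mulmx1.
  rewrite mxtrace_mulC -(mulmxA (D *m D) V^T V) hV mulmx1 mulmx_diag mxtrace_diag.
  by apply: eq_bigr => i _; rewrite !mxE expr2.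
have tr2 : \tr (A^T *m A) = \sum_(i < M) row_norm2 A i.
  rewrite /mxtrace /row_norm2 exchange_big /=.
  apply: eq_bigr => i _; rewrite mxE; apply: eq_bigr => j _.
  by rewrite !mxE expr2.
have h1 : sigma ord0 ^+ 2 <= \sum_(i < N.+1) sigma i ^+ 2.
  rewrite (bigD1 ord0) //= lerDl; apply: sumr_ge0 => i _; exact: sqr_ge0.
apply: (le_trans h1); rewrite -tr1 tr2.
apply: le_trans (_ : \sum_(i < M) Ltilde A <= _).
  apply: ler_sum => i _; rewrite /Ltilde; apply: le_bigmax_seq.
  exact: mem_index_enum.
by rewrite sumr_const card_ord mulr_natl.
Qed.

End H.

Theorem lemma21 (R : realType) (M N : nat) (A : 'M[R]_(M, N.+1))
  (sigma : 'I_N.+1 -> R) (l : 'I_N.+1) (a b gamma : R) (n k : nat) :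
  (N.+1 <= M)%N ->
  \rank A = N.+1 ->
  is_singular_values A sigma ->
  0 < sigma ord_max ->
  1 / 2 < gamma -> gamma < 1 -> 0 < a -> 1 < b ->
  a / b `^ gamma <= 1 / (2 * M%:R * Ltilde A) ->
  (k <= n)%N ->
  let smax := sigma ord0 in
  let smin := sigma ord_max in
  let cA := smax ^+ 2 / smin ^+ 2 in
  let Af := fun al : R => 1 - 2 * al * sigma l ^+ 2 in
  let Bf := fun al : R => al ^+ 2 * M%:R * Ltilde A * cA * smax ^+ 2 in
  let pf := fun al : R => 1 - al * smin ^+ 2 in
  Bk Af Bf pf (alpha a b gamma) n k <=
    a ^+ 2 * M%:R * Ltilde A * cA * smax ^+ 2 / (2 * gamma - 1)
    * (b + k%:R - 1) `^ (1 - 2 * gamma)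
    * expR (a * smin ^+ 2 / (1 - gamma) * (b + k%:R + 1) `^ (1 - gamma))
    * expR (- (a * smin ^+ 2 / (1 - gamma)) * (b + n%:R + 1) `^ (1 - gamma)).
Proof.
move=> _ _ hsv sm0 g1 g2 a0 b1 hab kn; cbv zeta.
set smax := sigma ord0; set smin := sigma ord_max; set cA := smax ^+ 2 / smin ^+ 2.
have hsv' := hsv; case: hsv' => sg0 [sgmono _].
have s02 := @svd_bound R M N A sigma hsv.
set ML := M%:R * Ltilde A.
have ML2 : 2 * M%:R * Ltilde A = 2 * ML by rewrite /ML mulrA.
rewrite ML2 in hab.
have x0 : 0 < a / b `^ gamma by rewrite divr_gt0 // powR_gt0 //; lra.
have q0 : 0 < 2 * ML.
  have : 0 < 1 / (2 * ML) by apply: lt_le_trans hab.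
  by rewrite div1r invr_gt0.
have hstep : 2 * (a / b `^ gamma) * smax ^+ 2 <= 1.
  have h1 : a / b `^ gamma * (2 * ML) <= 1.
    have := ler_wpM2r (ltW q0) hab; rewrite div1r mulVf //; exact: lt0r_neq0.
  have : 0 <= smax ^+ 2 by apply: sqr_ge0.
  rewrite -/smax in s02; nra.
have sml : smin <= sigma l by apply: sgmono; rewrite -ltnS ltn_ord.
have sl0 : sigma l <= smax by apply: sgmono.
have K0 : 0 <= ML * cA * smax ^+ 2.
  have ML0 : 0 <= ML by lra.
  have cA0 : 0 <= cA by apply: divr_ge0; apply: sqr_ge0.
  by apply: mulr_ge0; [apply: mulr_ge0|apply: sqr_ge0].
have E : a ^+ 2 * M%:R * Ltilde A * cA * smax ^+ 2 = ML * cA * smax ^+ 2 * a ^+ 2.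
  by rewrite /ML; ring.
rewrite E.
apply: (@main_bound R a b gamma (sigma l) smin smax (ML * cA * smax ^+ 2)) => //.
move=> al; rewrite /ML; ring.
Qed.
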